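(* Let $X$ be a compact subanalytic subset of $\mathbb{R}^n$. Let $p\mapsto q_X(p)$ be any function $\mathbb{N}\to\mathbb{N}$ with $q_X(p)\ge p$ such that, for every $p$, every $f:X\to\mathbb{R}$ and every $q\ge q_X(p)$: if $\nabla^qf:\tau^q(X)\to\mathbb{R}$ then $f$ is the restriction of a $\mathcal{C}^p$ function on $\mathbb{R}^n$, and if moreover $a\in X$ and $\nabla^q_af=0$ then $f$ is the restriction of a $\mathcal{C}^p$ function on $\mathbb{R}^n$ that is $p$-flat at $a$. If $s\ge p$ and $q\ge q_X(s)$, then $$\mathcal{T}^s(X)_p\subset\tau^q(X)_p.$$
   Context: Notation. $\mathcal{P}_k$: real polynomials on $\mathbb{R}^n$ of degree $\le k$; $\mathcal{P}_k^*$ dual; $r_k=\dim\mathcal{P}_k$. For $\xi\in\mathcal{P}_k^*$, $b\in\mathbb{R}^n$, $|\alpha|\le k$: $\xi_\alpha(b):=\xi(\tfrac1{\alpha!}(x-b)^\alpha)$; $\delta_a(P)=P(a)$. A bundle over $X$ with fibres in $W$ is a subset of $X\times W$ with linear-subspace fibres. $p$-flat at $a$: all partial derivatives of order $\le p$ vanish at $a$. $T^p_aF$ is the Taylor polynomial of order $p$ of $F$ at $a$. Paratangent bundle of order $k$: for a bundle $E\subset X\times\mathcal{P}_k^*$, $\Delta E=\{(a,b,\xi+\eta):a,b\in X,\xi\in E_a,\eta\in E_b,|a-b|^{k-|\alpha|}|\eta_\alpha(b)|\le1\ \forall|\alpha|\le k\}$, $E'=\{(a,\xi):(a,a,\xi)\in\overline{\Delta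 E}\}$, $\rho(E)=\{(a,\xi):\xi\in\operatorname{Span}E'_a\}$; with $E_0=\{(a,\lambda\delta_a)\}$, $\tau^k(X):=\rho^{2r_k}(E_0)$ (the iterates are constant from $2r_k$ on). For $f:X\to\mathbb{R}$ and bundles $\Phi\subset X\times(\mathcal{P}_k^*\times\mathbb{R})$: $\Delta\Phi=\{(a,b,\xi+\eta,\lambda+\mu):(\xi,\lambda)\in\Phi_a,(\eta,\mu)\in\Phi_b,|a-b|^{k-|\alpha|}|\eta_\alpha(b)|\le1\ \forall|\alpha|\le k\}$, $\Phi'=\{(a,\xi,\lambda):(a,a,\xi,\lambda)\in\overline{\Delta\Phi}\}$, $\rho(\Phi)$ fibrewise span of $\Phi'$; $\nabla^kf:=\rho^{2(r_k+1)}(\Phi_0)$ with $\Phi_0=\{(a,\lambda\delta_a,\lambda f(a))\}$. ''$\nabla^kf:\tau^k(X)\to\mathbb{R}$'' means each $\xi\in\tau^k_a(X)$ has exactly one $\lambda$ with $(a,\xi,\lambda)\in\nabla^kf$, written $\nabla^k_af(\xi)$; ''$\nabla^k_af=0$'' means it is $0$ for all $\xi\in\tau^k_a(X)$. For $q\ge p$ and $a\in\mathbb{R}^n$, $\pi_a:\mathcal{P}_q\to\mathcal{P}_p$ truncates $\sum_{|\beta|\le q}c_\beta(x-a)^\beta$ to $\sum_{|\beta|\le p}c_\beta(x-a)^\beta$ and $\iota_a(\xi)=\xi\circ\pi_a$. $\tau^q(X)_p$ has fibres $\iota_a^{-1}(\tau^q_a(X))\subset\mathcal{P}_p^*$. $I^s(X)$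 is the ideal of $\mathcal{C}^s$ functions on $\mathbb{R}^n$ vanishing on $X$. For $s\ge p$, $\mathcal{T}^s(X)_p$ is the bundle over $X$ with fibre $\mathcal{T}^s_a(X)_p=\{\xi\in\mathcal{P}_p^*:\xi(T^p_ah)=0\text{ for all }h\in I^s(X)\}$. *)

(* Defs.v *)
From HB Require Import structures.
From mathcomp Require Import all_boot all_order all_algebra.
From mathcomp Require Import all_classical all_reals all_analysis.
Set Implicit Arguments. Unset Strict Implicit. Unset Printing Implicit Defensive.
Import Order.TTheory GRing.Theory Num.Theory.
Import numFieldNormedType.Exports.
Local Open Scope classical_set_scope.
Local Open Scope ring_scope.

Definition midx (n k : nat) :=
  {a : {ffun 'I_n -> 'I_k.+1} | (\sum_(i < n) (a i : nat) <= k)%N}.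

Definition mval n k (a : midx n k) : 'I_n -> nat := fun i => (val a i : nat).
Definition mdeg n (a : 'I_n -> nat) : nat := (\sum_(i < n) a i)%N.
Definition mle n (a b : 'I_n -> nat) : bool := [forall i, (a i <= b i)%N].
Definition msub n (a b : 'I_n -> nat) : 'I_n -> nat := fun i => (a i - b i)%N.
Definition mfact n (a : 'I_n -> nat) : nat := (\prod_(i < n) (a i)`!)%N.
Definition mbinom n (a b : 'I_n -> nat) : nat := (\prod_(i < n) 'C(a i, b i))%N.

Section Poly.
Variables (R : realType) (n : nat).
Local Notation pt := 'rV[R]_n.

Definition mono (x : pt) (a : 'I_n -> nat) : R := \prod_(i < n) (x 0 i) ^+ (a i).

Definition enorm d (v : 'rV[R]_d) : R := Num.sqrt (\sum_(i < d) (v 0 i) ^+ 2).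

(* P_k is modelled by coefficient vectors midx n k -> R in the monomial basis
   x^beta; P_k^* is modelled by (midx n k -> R), xi |-> (xi(x^beta))_beta,
   which is a linear isomorphism onto the dual. *)
Definition dual (k : nat) := midx n k -> R.

(* xi applied to the polynomial  sum_alpha d_alpha (x-b)^alpha  (|alpha| <= k) *)
Definition pair_at k (xi : dual k) (b : pt) (d : midx n k -> R) : R :=
  \sum_(al : midx n k) d al *
    \sum_(be : midx n k)
       (if mle (mval be) (mval al)
        then xi be * (mbinom (mval al) (mval be))%:R * mono (- b) (msub (mval al) (mval be))
        else 0).

(* xi_alpha(b) = xi((x-b)^alpha / alpha!) *)
Definition xi_at k (xi : dual k) (b : pt) (al : midx n k) : R :=
  pair_at xi b (fun be => if be == al then ((mfact (mval al))%:R)^-1 else 0).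

Definition delta k (a : pt) : dual k := fun be => mono a (mval be).

Definition dscale k (t : R) (xi : dual k) : dual k := fun be => t * xi be.
Definition dadd k (xi eta : dual k) : dual k := fun be => xi be + eta be.

Definition bundle k := pt -> set (dual k).

Definition DeltaE (X : set pt) k (E : bundle k) : pt -> pt -> set (dual k) :=
  fun a b z => X a /\ X b /\ exists xi eta, E a xi /\ E b eta /\ z = dadd xi eta /\
     forall al : midx n k,
       (enorm (a - b)) ^+ (k - mdeg (mval al)) * `|xi_at eta b al| <= 1.

(* (a, a, xi) in the closure of Delta E in R^n x R^n x P_k^* *)
Definition Eprime (X : set pt) k (E : bundle k) : bundle k :=
  fun a xi => forall eps : R, 0 < eps ->
    exists a' b' z, DeltaE X E a' b' z /\ enorm (a' - a) < eps /\ enorm (b' - a) < eps /\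
      forall be, `|z be - xi be| < eps.

Definition in_span k (S : set (dual k)) (xi : dual k) : Prop :=
  exists m (c : 'I_m -> R) (w : 'I_m -> dual k),
      (forall i, S (w i)) /\ xi = (fun be => \sum_(i < m) c i * w i be).

Definition rhoE (X : set pt) k (E : bundle k) : bundle k :=
  fun a xi => X a /\ in_span (Eprime X E a) xi.

Definition E0 (X : set pt) k : bundle k :=
  fun a xi => X a /\ exists t : R, xi = dscale t (delta a : dual k).

Definition rdim k : nat := #|{: midx n k}|.

Definition tau (X : set pt) k : bundle k := iter (2 * rdim k) (@rhoE X k) (@E0 X k).

Definition fbundle k := pt -> dual k -> R -> Prop.

Definition DeltaPhi (X : set pt) k (P : fbundle k) : pt -> pt -> dual k -> R -> Prop :=
  fun a b z nu => X a /\ X b /\ exists xi la eta mu,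
     P a xi la /\ P b eta mu /\ z = dadd xi eta /\ nu = la + mu /\
     forall al : midx n k,
       (enorm (a - b)) ^+ (k - mdeg (mval al)) * `|xi_at eta b al| <= 1.

Definition Phiprime (X : set pt) k (P : fbundle k) : fbundle k :=
  fun a xi la => forall eps : R, 0 < eps ->
    exists a' b' z nu, DeltaPhi X P a' b' z nu /\ enorm (a' - a) < eps /\
      enorm (b' - a) < eps /\ `|nu - la| < eps /\
      forall be, `|z be - xi be| < eps.

Definition in_span2 k (S : dual k -> R -> Prop) (xi : dual k) (la : R) : Prop :=
  exists m (c : 'I_m -> R) (w : 'I_m -> dual k) (l : 'I_m -> R),
      (forall i, S (w i) (l i)) /\ xi = (fun be => \sum_(i < m) c i * w i be) /\
      la = \sum_(i < m) c i * l i.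

Definition rhoPhi (X : set pt) k (P : fbundle k) : fbundle k :=
  fun a xi la => X a /\ in_span2 (Phiprime X P a) xi la.

Definition Phi0 (X : set pt) (f : pt -> R) k : fbundle k :=
  fun a xi la => X a /\ exists t : R, xi = dscale t (delta a : dual k) /\ la = t * f a.

Definition nabla (X : set pt) k (f : pt -> R) : fbundle k :=
  iter (2 * (rdim k).+1) (@rhoPhi X k) (@Phi0 X f k).

Definition nabla_is_fun (X : set pt) k (f : pt -> R) : Prop :=
  forall a, X a -> forall xi, @tau X k a xi ->
    exists! la : R, @nabla X k f a xi la.

Definition nabla_zero_at (X : set pt) k (f : pt -> R) (a : pt) : Prop :=
  forall xi, @tau X k a xi -> forall la, @nabla X k f a xi la -> la = 0.

Definition pderiv (i : 'I_n) (g : pt -> R) : pt -> R :=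
  fun x => derive g x (delta_mx 0 i : pt).

Definition partials (l : seq 'I_n) (g : pt -> R) : pt -> R := foldr pderiv g l.

Definition Cs (s : nat) (g : pt -> R) : Prop :=
  forall l : seq 'I_n, (size l <= s)%N ->
    continuous (partials l g) /\
    ((size l < s)%N -> forall (i : 'I_n) (x : pt), derivable (partials l g) x (delta_mx 0 i)).

Definition flat (p : nat) (g : pt -> R) (a : pt) : Prop :=
  forall l : seq 'I_n, (size l <= p)%N -> partials l g a = 0.

Definition mseq (al : 'I_n -> nat) : seq 'I_n :=
  flatten [seq nseq (al i) i | i <- enum 'I_n].

Definition dalpha (al : 'I_n -> nat) (g : pt -> R) (a : pt) : R := partials (mseq al) g a.

(* xi(T^p_a g) where T^p_a g = sum_{|alpha|<=p} d^alpha g(a)/alpha! (x-a)^alpha *)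
Definition xi_taylor p (xi : dual p) (a : pt) (g : pt -> R) : R :=
  pair_at xi a (fun al => dalpha (mval al) g a / (mfact (mval al))%:R).

Definition Tcal (X : set pt) (s p : nat) : bundle p :=
  fun a xi => X a /\ forall h : pt -> R, Cs s h -> (forall x, X x -> h x = 0) ->
     xi_taylor xi a h = 0.

(* iota_a : P_p^* -> P_q^*, xi |-> xi o pi_a ;
   pi_a(x^beta) = sum_{alpha <= beta, |alpha| <= p} C(beta,alpha) a^(beta-alpha) (x-a)^alpha *)
Definition iota p q (a : pt) (xi : dual p) : dual q :=
  fun be => pair_at xi a (fun al : midx n p =>
     if mle (mval al) (mval be)
     then (mbinom (mval be) (mval al))%:R * mono a (msub (mval be) (mval al))
     else 0).

Definition tau_p (X : set pt) (q p : nat) : bundle p :=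
  fun a xi => @tau X q a (@iota p q a xi).

End Poly.
Arguments tau {R n} X k _ _.
Arguments nabla {R n} X k f _ _ _.
Arguments nabla_is_fun {R n} X k f.
Arguments nabla_zero_at {R n} X k f a.
Arguments Tcal {R n} X s p _ _.
Arguments tau_p {R n} X q p _ _.
Arguments iota {R n} p q a xi _.
Arguments Cs {R n} s g.
Arguments flat {R n} p g a.

Section Analytic.
Variable R : realType.

Definition analytic_on d (U : set 'rV[R]_d) (f : 'rV[R]_d -> R) : Prop :=
  forall x0, U x0 -> exists r : R, 0 < r /\
    exists c : ('I_d -> nat) -> R, forall x, enorm (x - x0) < r ->
      (exists M : R, forall N : nat,
         \sum_(al : midx d N) `|c (mval al) * mono (x - x0) (mval al)| <= M) /\
      ((fun N : nat => \sum_(al : midx d N) c (mval al) * mono (x - x0) (mval al))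
         @ \oo --> f x).

Definition semianalytic d (S : set 'rV[R]_d) : Prop :=
  forall x : 'rV[R]_d, exists U : set 'rV[R]_d, open U /\ U x /\
    exists (m : nat) (f : 'I_m -> 'rV[R]_d -> R) (g : 'I_m -> seq ('rV[R]_d -> R)),
      (forall j, analytic_on U (f j)) /\ (forall j h, h \in g j -> analytic_on U h) /\
      S `&` U = (fun y => U y /\ exists j, f j y = 0 /\ forall h, h \in g j -> 0 < h y).

Definition subanalytic n (X : set 'rV[R]_n) : Prop :=
  forall x : 'rV[R]_n, exists U : set 'rV[R]_n, open U /\ U x /\
    exists (m : nat) (A : set 'rV[R]_(n + m)),
      semianalytic A /\ compact (closure A) /\
      X `&` U = [set lsubmx y | y in A].

End Analytic.

(* Main.v *)
Require Import Defs.
From HB Require Import structures.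
From mathcomp Require Import all_boot all_order all_algebra.
From mathcomp Require Import all_classical all_reals all_analysis.
From mathcomp Require Import ring lra.
Import Order.TTheory GRing.Theory Num.Theory.
Import numFieldNormedType.Exports.
Local Open Scope classical_set_scope.
Local Open Scope ring_scope.
Set Implicit Arguments. Unset Strict Implicit.

Section S.
Variables (R : realType) (n : nat).
Local Notation pt := 'rV[R]_n.

Lemma is_derive_line (f : pt -> R) (x v : pt) (phi : R -> R) (d : R) :
  (forall h, f (h *: v + x) = phi h) -> is_derive (0:R) 1 phi d -> is_derive x v f d.
Proof.
move=> E [dphi vphi].
have Ef : (fun h : R => f (h *: v + x)) = phi by apply/funext.
have f0 : f x = phi 0 by rewrite -E scale0r add0r.
split.
  by apply/derivable1P; rewrite Ef.
rewrite -vphi /derive.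
have -> : (fun h : R => h^-1 *: ((f \o shift x) (h *: v) - f x)) =
          (fun h : R => h^-1 *: ((phi \o shift 0) (h *: 1) - phi 0)).
  by apply/funext => h /=; rewrite E f0 addr0 /GRing.scale /= mulr1.
by [].
Qed.

Definition dec (i : 'I_n) (m : 'I_n -> nat) : 'I_n -> nat :=
  fun j => if j == i then (m j).-1 else m j.

Lemma is_derive_mono (x : pt) (i : 'I_n) (m : 'I_n -> nat) :
  is_derive x (delta_mx 0 i) (fun y => mono y m) ((m i)%:R * mono x (dec i m)).
Proof.
pose K := \prod_(j < n | j != i) (x 0 j) ^+ (m j).
apply: (@is_derive_line _ _ _ (((@idfun R) + cst (x 0 i)) ^+ (m i) * cst K)).
  move=> h; rewrite /mono (bigD1 i) //= !fctE; congr (_ * _).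
    by rewrite !mxE eqxx /= eqxx mulr1.
  apply: eq_bigr => j ji; rewrite !mxE eqxx /=.
  by case: eqP => [ji'|_]; [rewrite ji' eqxx in ji | rewrite mulr0 add0r].
apply: is_derive_eq.
rewrite /mono (bigD1 i) //= !fctE add0r /dec eqxx.
have -> : \prod_(j < n | j != i) x 0 j ^+ (if j == i then (m j).-1 else m j) = K.
  by apply: eq_bigr => j /negbTE ->.
rewrite /cst /=.
rewrite scaler0 add0r addr0 /GRing.scale /= mulr1.
by rewrite mulrC -mulrA.
Qed.

Definition psum (I : finType) (c : I -> R) (e : I -> 'I_n -> nat) : pt -> R :=
  fun x => \sum_(k : I) c k * mono x (e k).


Lemma is_derive_psum (I : finType) (c : I -> R) (e : I -> 'I_n -> nat) (x v : pt) (d : I -> R) :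
  (forall k, is_derive x v (fun y => mono y (e k)) (d k)) ->
  is_derive x v (psum c e) (\sum_k c k * d k).
Proof.
move=> H.
have -> : psum c e = \sum_(k : I) (fun y => c k * mono y (e k)).
  by rewrite fct_sumE.
elim/big_ind2 : _ => //.
- exact: is_derive_cst.
- by move=> f1 d1 f2 d2 H1 H2; apply: is_deriveD.
- move=> k _.
  have -> : (fun y => c k * mono y (e k)) = c k \*: (fun y => mono y (e k)) by [].
  have := @is_deriveZ R pt R (fun y => mono y (e k)) (c k) x v (d k) (H k).
  by [].
Qed.

Lemma cont_prod (I : finType) (F : I -> pt -> R) :
  (forall k, continuous (F k)) -> continuous (fun y => \prod_k F k y).
Proof.
move=> H; rewrite -fct_prodE.
elim/big_ind : _ => //.
- exact: cst_continuous.
- by move=> f g cf cg y; apply: continuousM; [apply: cf | apply: cg].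
Qed.

Lemma cont_sum (I : finType) (F : I -> pt -> R) :
  (forall k, continuous (F k)) -> continuous (fun y => \sum_k F k y).
Proof.
move=> H; rewrite -fct_sumE.
elim/big_ind : _ => //.
- exact: cst_continuous.
- by move=> f g cf cg y; apply: continuousD; [apply: cf | apply: cg].
Qed.

Lemma cont_mono (m : 'I_n -> nat) : continuous (fun y : pt => mono y m).
Proof.
apply: cont_prod => j.
elim: (m j) => [|k IH].
  have -> : (fun y : pt => y 0 j ^+ 0) = cst 1 by apply/funext => y; rewrite expr0.
  exact: cst_continuous.
have -> : (fun y : pt => y 0 j ^+ k.+1) = (fun y : pt => y 0 j) \* (fun y : pt => y 0 j ^+ k).
  by apply/funext => y; rewrite exprS.
move=> y; apply: continuousM; last exact: IH.
exact: coord_continuous.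
Qed.

Lemma cont_psum (I : finType) (c : I -> R) (e : I -> 'I_n -> nat) : continuous (psum c e).
Proof.
apply: cont_sum => k y; apply: continuousM.
  exact: cst_continuous.
exact: cont_mono.
Qed.


Definition expL (l : seq 'I_n) (m : 'I_n -> nat) : 'I_n -> nat := foldr dec m l.
Fixpoint coefL (l : seq 'I_n) (m : 'I_n -> nat) : R :=
  match l with [::] => 1 | i :: l' => (expL l' m i)%:R * coefL l' m end.

Lemma pderiv_psum (I : finType) (c : I -> R) (e : I -> 'I_n -> nat) (i : 'I_n) :
  pderiv i (psum c e) = psum (fun k => c k * (e k i)%:R) (fun k => dec i (e k)).
Proof.
apply/funext => x; rewrite /pderiv.
rewrite (@derive_val _ _ _ _ _ _ _ (is_derive_psum c (fun k => is_derive_mono x i (e k)))).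
by rewrite /psum; apply: eq_bigr => k _; rewrite mulrA.
Qed.

Lemma partials_psum (I : finType) (c : I -> R) (e : I -> 'I_n -> nat) (l : seq 'I_n) :
  partials l (psum c e) = psum (fun k => c k * coefL l (e k)) (fun k => expL l (e k)).
Proof.
elim: l => [|i l IH] /=.
  by rewrite /psum; apply/funext => x; apply: eq_bigr => k _; rewrite mulr1.
rewrite IH pderiv_psum /psum; apply/funext => x; apply: eq_bigr => k _.
by congr (_ * _); rewrite -mulrA; congr (_ * _); exact: mulrC.
Qed.

Lemma Cs_psum (I : finType) (c : I -> R) (e : I -> 'I_n -> nat) (s : nat) :
  Cs s (psum c e).
Proof.
move=> l _; rewrite partials_psum; split; first exact: cont_psum.
move=> _ i x; exact: (@ex_derive _ _ _ _ _ _ _ (is_derive_psum _ (fun k => is_derive_mono x i _))).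
Qed.

Lemma expL_E (l : seq 'I_n) (m : 'I_n -> nat) : expL l m = fun j => (m j - count_mem j l)%N.
Proof.
elim: l => [|i l IH]; apply/funext => j /=; first by rewrite subn0.
rewrite /dec /expL /= -/(expL l m) IH.
case: eqP => [->|/eqP ji]; first by rewrite eqxx add1n subnS.
by rewrite eq_sym (negbTE ji) add0n.
Qed.

Lemma coefL_E (l : seq 'I_n) (m : 'I_n -> nat) :
  coefL l m = (\prod_j (m j) ^_ (count_mem j l))%:R.
Proof.
elim: l => [|i l IH] /=.
  by rewrite big1 // => j _; rewrite ffactn0.
rewrite IH expL_E -natrM; congr (_%:R).
rewrite (bigD1 i) //= [in RHS](bigD1 i) //= eqxx add1n ffactnSr.
rewrite mulnA; congr (_ * _)%N; first exact: mulnC.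
by apply: eq_bigr => j ji; rewrite eq_sym (negbTE ji) add0n.
Qed.

Lemma Cs_sub (s : nat) (g1 g2 : pt -> R) : Cs s g1 -> Cs s g2 ->
  forall l, (size l <= s)%N -> partials l (fun x => g1 x - g2 x) = (fun x => partials l g1 x - partials l g2 x).
Proof.
move=> C1 C2; elim => [|i l IH] //= Hs.
have Hl : (size l <= s)%N by apply: ltnW.
rewrite IH //; apply/funext => x; rewrite /pderiv.
have d1 := (C1 l Hl).2 Hs i x.
have d2 := (C2 l Hl).2 Hs i x.
exact: (deriveB d1 d2).
Qed.

Lemma Cs_subP (s : nat) (g1 g2 : pt -> R) : Cs s g1 -> Cs s g2 -> Cs s (fun x => g1 x - g2 x).
Proof.
move=> C1 C2 l Hl; rewrite (Cs_sub C1 C2 Hl); split.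
  move=> x; apply: continuousB; [exact: (C1 l Hl).1 | exact: (C2 l Hl).1].
move=> Hs i x; apply: derivableB; [exact: ((C1 l Hl).2 Hs) | exact: ((C2 l Hl).2 Hs)].
Qed.


Lemma sum_enum (F : 'I_n -> nat) : (\sum_(i <- Finite.enum 'I_n) F i)%N = (\sum_i F i)%N.
Proof. by rewrite [index_enum _]unlock. Qed.

Lemma count_mseq (al : 'I_n -> nat) j : count_mem j (mseq al) = al j.
Proof.
rewrite /mseq count_flatten sumnE !big_map sum_enum.
rewrite (bigD1 j) //= count_nseq /= eqxx mul1n big1 ?addn0 // => i ij.
by rewrite count_nseq /= (negbTE ij).
Qed.

Lemma size_mseq (al : 'I_n -> nat) : size (mseq al) = mdeg al.
Proof.
rewrite /mseq size_flatten /shape sumnE -map_comp !big_map sum_enum.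
by apply: eq_bigr => i _; rewrite /= size_nseq.
Qed.

Lemma mbinom_if (x y : 'I_n -> nat) (M : R) :
  (if mle x y then (mbinom y x)%:R * M else 0) = (mbinom y x)%:R * M.
Proof.
case: ifP => // /negP/negP/forallPn [i Hi].
rewrite /mbinom (bigD1 i) //= bin_small ?mul0n ?mul0r //.
by rewrite ltnNge.
Qed.

Lemma dalpha_psum (I : finType) (c : I -> R) (e : I -> 'I_n -> nat) (al : 'I_n -> nat) (a : pt) :
  dalpha al (psum c e) a =
  \sum_k c k * ((mbinom (e k) al)%:R * (mfact al)%:R) * mono a (msub (e k) al).
Proof.
rewrite /dalpha partials_psum /psum; apply: eq_bigr => k _.
rewrite coefL_E expL_E -natrM; congr (_ * _%:R * mono a _).
  rewrite /mbinom /mfact -big_split /=; apply: eq_bigr => j _.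
  by rewrite count_mseq bin_ffact.
by apply/funext => j; rewrite count_mseq.
Qed.


Lemma mfact_neq0 (al : 'I_n -> nat) : (mfact al)%:R != 0 :> R.
Proof.
rewrite pnatr_eq0 -lt0n /mfact; apply/prodn_gt0 => i; exact: fact_gt0.
Qed.

Lemma taylor_iota p q (c : midx n q -> R) (xi : dual R n p) (a : pt) :
  xi_taylor xi a (psum c (fun b => mval b)) = \sum_(b : midx n q) @Defs.iota R n p q a xi b * c b.
Proof.
rewrite /xi_taylor /Defs.iota /pair_at.
under [RHS]eq_bigr => b _.
  under eq_bigr => al _ do rewrite mbinom_if.
  rewrite mulr_suml.
  over.
rewrite exchange_big /=; apply: eq_bigr => al _.
rewrite dalpha_psum !mulr_suml; apply: eq_bigr => b _.
have hF := mfact_neq0 (mval al).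
field.
exact: hF.
Qed.


Section Sep.
Variable k : nat.
Local Notation I := (midx n k).
Local Notation N := #|{: I}|.

Definition toR (w : I -> R) : 'rV[R]_N := \row_j w (enum_val j).

Lemma toRK (w : I -> R) i : toR w 0 (enum_rank i) = w i.
Proof. by rewrite /toR mxE enum_rankK. Qed.

Lemma sum_reindex (F : I -> R) : \sum_(i : I) F i = \sum_(j < N) F (enum_val j).
Proof.
rewrite (reindex (@enum_val _ (pred_of_simpl predT))) //=.
by exists (@enum_rank _) => x _; [rewrite enum_valK | rewrite enum_rankK].
Qed.

Definition Pr (S : set (I -> R)) (r : nat) : Prop :=
  exists A : 'M[R]_(r, N), (forall k, exists w, S w /\ row k A = toR w) /\ \rank A = r.

Lemma separate (S : set (I -> R)) (v : I -> R) :
  ~ in_span S v ->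
  exists c : I -> R, (forall w, S w -> \sum_i w i * c i = 0) /\ \sum_i v i * c i != 0.
Proof.
move=> nv.
have P0 : exists r, Pr S r.
  exists 0%N; exists 0; split; first by case.
  by rewrite mxrank0.
have Pb : forall r, Pr S r -> (r <= N)%N.
  by move=> r [A [_ <-]]; exact: rank_leq_col.
have P0' : exists r, `[< Pr S r >] by case: P0 => r Pr; exists r; apply/asboolP.
have Pb' : forall r, `[< Pr S r >] -> (r <= N)%N by move=> r /asboolP; exact: Pb.
case: (ex_maxnP P0' Pb') => r /asboolP [A [HA rA]] maxr.
have key : forall w, (toR w *m cokermx A) 0 = fun j => \sum_i w i * cokermx A (enum_rank i) j.
  move=> w; apply/funext => j; rewrite sum_reindex mxE; apply: eq_bigr => j' _.
  by rewrite /toR mxE enum_valK.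
have sub : forall w, S w -> (toR w <= A)%MS.
  move=> w Sw; apply/negPn/negP => nw.
  have : (r + 1 <= r)%N.
    apply: maxr; apply/asboolP; exists (col_mx A (toR w)); split.
      move=> k0; rewrite -[k0]splitK; case: (fintype.split k0) => k' /=.
        by rewrite rowKu; apply: HA.
      rewrite rowKd; exists w; split => //.
      by apply/matrixP => i j; rewrite !mxE.
    apply/eqP; rewrite eqn_leq rank_leq_row /=.
    rewrite [X in (X <= _)%N]addn1 -{1}rA; apply: rank_ltmx.
    rewrite ltmxE col_mx_sub (negbTE nw) andbF andbT.
    have := addsmxSl A (toR w); by rewrite addsmxE.
  by rewrite addn1 ltnn.
have nvA : ~~ (toR v <= A)%MS.
  apply/negP => /submxP [u vE]; apply: nv.
  exists r, (fun k => u 0 k), (fun k => fun i => A k (enum_rank i)); split.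
    move=> k0; have [w [Sw rw]] := HA k0.
    suff -> : (fun i => A k0 (enum_rank i)) = w by [].
    apply/funext => i; rewrite -toRK -rw mxE //.
  apply/funext => be; rewrite -toRK vE mxE; apply: eq_bigr => k0 _ //.
have nz : toR v *m cokermx A != 0 by rewrite -submxE.
case: (pickP (fun j => (toR v *m cokermx A) 0 j != 0)) => [j Hj|H]; last first.
  exfalso; move/negP: nz; apply; apply/eqP/matrixP => i j; rewrite ord1 [RHS]mxE.
  by move: (H j) => /negbFE /eqP.
exists (fun i => cokermx A (enum_rank i) j); split.
  move=> w Sw; have := sub w Sw; rewrite submxE => /eqP E.
  by have := key w; rewrite E => /(congr1 (fun f => f j)); rewrite mxE => <-.
by have := key v; move=> /(congr1 (fun f => f j)) /= <-.
Qed.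
End Sep.

Section Nab.
Variables (X : set pt) (q : nat) (c : midx n q -> R).
Local Notation Dq := (dual R n q).
Definition Lc (z : Dq) : R := \sum_b z b * c b.
Definition Pc : pt -> R := psum c (fun b => mval b).
Definition Cc : R := \sum_b `|c b|.
Definition zeroD : Dq := fun _ => 0.

Lemma Cc_ge0 : 0 <= Cc.
Proof. by apply: sumr_ge0 => b _. Qed.

Lemma L_add (x y : Dq) : Lc (Defs.dadd x y) = Lc x + Lc y.
Proof. by rewrite /Lc -big_split /=; apply: eq_bigr => b _; rewrite mulrDl. Qed.

Lemma L_span m (cc : 'I_m -> R) (w : 'I_m -> Dq) :
  Lc (fun be => \sum_(i < m) cc i * w i be) = \sum_(i < m) cc i * Lc (w i).
Proof.
rewrite /Lc; under eq_bigr => b _ do rewrite mulr_suml.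
rewrite exchange_big /=; apply: eq_bigr => i _.
by rewrite mulr_sumr; apply: eq_bigr => b _; rewrite mulrA.
Qed.

Lemma L_delta (t : R) (x : pt) : Lc (Defs.dscale t (delta x)) = t * Pc x.
Proof.
rewrite /Lc /Pc /psum mulr_sumr; apply: eq_bigr => b _.
by rewrite /Defs.dscale /delta -mulrA [mono _ _ * _]mulrC.
Qed.

Lemma L_close (z xi : Dq) (eps : R) : (forall be, `|z be - xi be| < eps) ->
  `|Lc z - Lc xi| <= Cc * eps.
Proof.
move=> H; rewrite /Lc -sumrB /Cc mulr_suml.
apply: (le_trans (ler_norm_sum _ _ _)); apply: ler_sum => b _.
rewrite -mulrBl normrM mulrC; apply: ler_wpM2l => //.
exact: ltW.
Qed.

Lemma zero_small (x : R) (K : R) : 0 <= K -> (forall eps, 0 < eps -> `|x| <= K * eps) -> x = 0.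
Proof.
move=> K0 H; apply/normr0_eq0/eqP; rewrite eq_le normr_ge0 andbT.
apply/ler_addgt0Pr => e e0; rewrite add0r.
have K1 : 0 < K + 1 by lra.
apply: (le_trans (H (e / (K + 1)) _)); first by apply: divr_gt0.
rewrite mulrA ler_pdivrMr //; nra.
Qed.

Lemma inv_prime (Phi : fbundle R n q) :
  (forall a xi la, Phi a xi la -> la = Lc xi) ->
  forall a xi la, Phiprime X Phi a xi la -> la = Lc xi.
Proof.
move=> H a xi la Hp; apply/eqP; rewrite -subr_eq0; apply/eqP.
apply: (@zero_small _ (1 + Cc)); first by have := Cc_ge0; lra.
move=> eps e0.
case: (Hp eps e0) => a' [b' [z [nu [HD [_ [_ [Hnu Hz]]]]]]].
case: HD => Xa' [Xb' [xi1 [la1 [eta [mu HD]]]]].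
case: HD => H1 [H2 [zE [nuE _]]].
have nuL : nu = Lc z by rewrite nuE zE L_add -(H _ _ _ H1) -(H _ _ _ H2).
have := L_close Hz.
have : `|la - nu| <= eps by rewrite distrC; apply: ltW.
rewrite nuL => h1 h2.
have := ler_normD (la - Lc z) (Lc z - Lc xi).
rewrite addrA subrK => h3; lra.
Qed.

Lemma inv_rho (Phi : fbundle R n q) :
  (forall a xi la, Phi a xi la -> la = Lc xi) ->
  forall a xi la, rhoPhi X Phi a xi la -> la = Lc xi.
Proof.
move=> H a xi la [_ [m [cc [w [l [Hw [-> ->]]]]]]].
rewrite L_span; apply: eq_bigr => i _; congr (_ * _).
exact: (inv_prime H (Hw i)).
Qed.

Lemma inv_iter m : forall a xi la, iter m (@rhoPhi R n X q) (@Phi0 R n X Pc q) a xi la -> la = Lc xi.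
Proof.
elim: m => [|m IH] /=.
  by move=> a xi la [_ [t [-> ->]]]; rewrite L_delta.
exact: inv_rho.
Qed.


Lemma ex_rho (E : bundle R n q) (Phi : fbundle R n q) :
  (forall a xi, E a xi -> Phi a xi (Lc xi)) ->
  forall a xi, rhoE X E a xi -> rhoPhi X Phi a xi (Lc xi).
Proof.
move=> H a xi [Xa [m [cc [w [Hw ->]]]]].
split => //; exists m, cc, w, (fun i => Lc (w i)); split; last by split => //; rewrite L_span.
move=> i eps e0.
have C0 := Cc_ge0.
set e' := eps / (1 + Cc).
have e'0 : 0 < e' by apply: divr_gt0 => //; lra.
have e'le : e' <= eps by rewrite /e' ler_pdivrMr; [nra | lra].
have Ce' : Cc * e' < eps by rewrite /e' mulrA ltr_pdivrMr; [nra | lra].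
case: (Hw i e' e'0) => a' [b' [z [HD [Ha [Hb Hz]]]]].
case: HD => Xa' [Xb' [xi1 [eta [E1 [E2 [zE cond]]]]]].
exists a', b', z, (Lc z); split.
  split => //; split => //; exists xi1, (Lc xi1), eta, (Lc eta).
  split; first exact: H.
  split; first exact: H.
  split => //; split; first by rewrite zE L_add.
  exact: cond.
split; first exact: (lt_le_trans Ha e'le).
split; first exact: (lt_le_trans Hb e'le).
split; first exact: (le_lt_trans (L_close Hz) Ce').
by move=> be; apply: (lt_le_trans (Hz be) e'le).
Qed.

Lemma ex_iter m : forall a xi, iter m (@rhoE R n X q) (@E0 R n X q) a xi ->
  iter m (@rhoPhi R n X q) (@Phi0 R n X Pc q) a xi (Lc xi).
Proof.
elim: m => [|m IH] /=.
  move=> a xi [Xa [t ->]]; split => //; exists t; split => //.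
  by rewrite L_delta.
exact: ex_rho.
Qed.

Lemma zero_iter m a : X a -> iter m (@rhoPhi R n X q) (@Phi0 R n X Pc q) a zeroD 0.
Proof.
move=> Xa; case: m => [|m] /=.
  split => //; exists 0; split; last by rewrite mul0r.
  by apply/funext => be; rewrite /zeroD /Defs.dscale mul0r.
split => //; exists 0%N, (fun _ => 0), (fun _ => zeroD), (fun _ => 0); split; first by case.
split; last by rewrite big_ord0.
by apply/funext => be; rewrite big_ord0.
Qed.

Lemma xi_at0 (b : pt) al : xi_at zeroD b al = 0.
Proof.
rewrite /xi_at /pair_at big1 // => al' _; rewrite big1 ?mulr0 // => be _.
by case: ifP => //; rewrite /zeroD !mul0r.
Qed.

Lemma enorm0 (a : pt) : enorm (a - a) = 0.
Proof.
by rewrite subrr /enorm big1 ?sqrtr0 // => i _; rewrite mxE expr2 mulr0.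
Qed.

Lemma infl (Phi : fbundle R n q) :
  (forall a, X a -> Phi a zeroD 0) ->
  forall a xi la, X a -> Phi a xi la -> rhoPhi X Phi a xi la.
Proof.
move=> Z a xi la Xa H; split => //.
exists 1%N, (fun _ => 1), (fun _ => xi), (fun _ => la); split; last first.
  split; last by rewrite big_ord1 mul1r.
  by apply/funext => be; rewrite big_ord1 mul1r.
move=> _ eps e0; exists a, a, xi, la; split.
  split => //; split => //; exists xi, la, zeroD, 0.
  split => //; split; first exact: Z.
  split; first by apply/funext => be; rewrite /Defs.dadd /zeroD addr0.
  split; first by rewrite addr0.
  by move=> al; rewrite xi_at0 normr0 mulr0.
rewrite enorm0 subrr normr0; do 3 (split => //).
by move=> be; rewrite subrr normr0.
Qed.

Lemma nabla_fun a : X a -> forall xi, tau X q a xi -> nabla X q Pc a xi (Lc xi).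
Proof.
move=> Xa xi Ht.
have H := ex_iter Ht.
have E2 : (2 * (rdim n q).+1 = (2 * rdim n q).+2)%N by rewrite mulnS.
rewrite /nabla E2 /=.
apply: infl => //; first by move=> a' Xa'; exact: (zero_iter (2 * rdim n q).+1).
apply: infl => //; move=> a' Xa'; exact: zero_iter.
Qed.

End Nab.
End S.
Theorem corollary2p4 (R : realType) (n : nat) (X : set 'rV[R]_n)
  (qX : nat -> nat) :
  compact X -> subanalytic X ->
  (forall p, (p <= qX p)%N) ->
  (forall (p : nat) (f : 'rV[R]_n -> R) (q : nat), (qX p <= q)%N ->
     nabla_is_fun X q f ->
     (exists F : 'rV[R]_n -> R, Cs p F /\ forall x, X x -> F x = f x) /\
     (forall a, X a -> nabla_zero_at X q f a ->
        exists F : 'rV[R]_n -> R, Cs p F /\ flat p F a /\ forall x, X x -> F x = f x)) ->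
  forall (s p q : nat), (p <= s)%N -> (qX s <= q)%N ->
    forall (a : 'rV[R]_n) (xi : dual R n p), Tcal X s p a xi -> tau_p X q p a xi.
Proof.
move=> _ _ _ Hext s p q ps qs a xi [Xa HT].
have r0 : (0 < rdim n q)%N.
  have z0 : (\sum_(i < n) ([ffun _ => @ord0 q] i : nat) <= q)%N.
    by rewrite big1 // => i _; rewrite ffunE.
  by apply/card_gt0P; exists (exist (fun a : {ffun 'I_n -> 'I_q.+1} => (\sum_(i < n) (a i : nat) <= q)%N) _ z0).
set m := (2 * rdim n q).-1.
have Em : (2 * rdim n q = m.+1)%N by rewrite /m prednK // muln_gt0.
set S := Eprime X (iter m (@rhoE R n X q) (@E0 R n X q)) a.
have tauE : forall xi', tau X q a xi' <-> in_span S xi'.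
  by move=> xi'; rewrite /tau Em /=; split; [case | split].
case: (pselect (tau_p X q p a xi)) => // nt.
have nv : ~ in_span S (Defs.iota p q a xi) by move=> /tauE.
have [c [Hc Hv]] := separate nv.
case: (Hext s (Pc c) q qs).
  move=> x Xx xi' Ht; exists (Lc c xi'); split; first exact: nabla_fun.
  by move=> la Hla; rewrite (inv_iter Hla).
move=> _ H2.
have Hz : nabla_zero_at X q (Pc c) a.
  move=> xi' Ht la Hla; rewrite (inv_iter Hla).
  have [m' [cc [w [Hw ->]]]] := (tauE xi').1 Ht.
  by rewrite L_span big1 // => i _; rewrite /Lc Hc ?mulr0.
have [F [CsF [flF FX]]] := H2 a Xa Hz.
have Hh := HT (fun x => Pc c x - F x) (Cs_subP (@Cs_psum R n _ c (fun b => mval b) s) CsF) (fun x Xx => ltac:(by rewrite /= FX // subrr)).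
exfalso; move/negP: Hv; apply; apply/eqP; rewrite -taylor_iota -Hh.
rewrite /xi_taylor; congr pair_at; apply/funext => al; congr (_ / _).
have Hs : (size (mseq (mval al)) <= s)%N.
  by rewrite size_mseq; exact: leq_trans (valP al) ps.
by rewrite /dalpha (Cs_sub (@Cs_psum R n _ c (fun b => mval b) s) CsF Hs) flF ?subr0.
Qed.
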